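(* Let $r:M\to M'$ be an epimorphism and $s:N'\to N$ a monomorphism in an abelian category $\mathcal{A}$. (1) If $N$ is strongly $M$-Rickart, then $N'$ is strongly $M'$-Rickart. (2) If $N$ is dual strongly $M$-Rickart, then $N'$ is dual strongly $M'$-Rickart.
   Context: A morphism $f:X\to Y$ is a section if $f'f=1_X$ for some $f'$, a retraction if $ff'=1_Y$ for some $f'$. A monomorphism $k:K\to X$ is fully invariant if for every $h:X\to X$ there is $\alpha:K\to K$ with $hk=k\alpha$; an epimorphism $c:X\to C$ is fully coinvariant if for every $h:X\to X$ there is $\gamma:C\to C$ with $ch=\gamma c$. For objects $M,N$: $N$ is strongly $M$-Rickart if the kernel ${\rm ker}(f)$ of every morphism $f:M\to N$ is a fully invariant section (of $M$); $N$ is dual strongly $M$-Rickart if the cokernel ${\rm coker}(f)$ of every morphism $f:M\to N$ is a fully coinvariant retraction (equivalently the image of $f$ is a fully invariant section of $N$). *)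

(* Defs.v *)
From HB Require Import structures.
From mathcomp Require Import all_boot all_order all_algebra.
Set Implicit Arguments. Unset Strict Implicit. Unset Printing Implicit Defensive.
Import GRing.Theory.
Local Open Scope ring_scope.

Record PreaddCat := {
  obj : Type;
  Mor : obj -> obj -> zmodType;
  comp : forall A B C : obj, Mor B C -> Mor A B -> Mor A C;
  idm : forall A : obj, Mor A A;
  compA : forall A B C D (h : Mor C D) (g : Mor B C) (f : Mor A B),
      comp h (comp g f) = comp (comp h g) f;
  comp1m : forall A B (f : Mor A B), comp (idm B) f = f;
  compm1 : forall A B (f : Mor A B), comp f (idm A) = f;
  compDl : forall A B C (g1 g2 : Mor B C) (f : Mor A B),
      comp (g1 + g2) f = comp g1 f + comp g2 f;
  compDr : forall A B C (g : Mor B C) (f1 f2 : Mor A B),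
      comp g (f1 + f2) = comp g f1 + comp g f2
}.

Arguments comp {p A B C} g f.
Arguments idm {p} A.

Notation "g \oc f" := (comp g f) (at level 40, left associativity).

Section CatDefs.
Context {C : PreaddCat}.
Implicit Types A B X Y : obj C.

Definition mono {A B} (f : Mor A B) : Prop :=
  forall X (g h : Mor X A), f \oc g = f \oc h -> g = h.

Definition epi {A B} (f : Mor A B) : Prop :=
  forall Y (g h : Mor B Y), g \oc f = h \oc f -> g = h.

Definition section {A B} (f : Mor A B) : Prop :=
  exists f' : Mor B A, f' \oc f = idm A.

Definition retraction {A B} (f : Mor A B) : Prop :=
  exists f' : Mor B A, f \oc f' = idm B.

Definition is_kernel {A B K} (f : Mor A B) (k : Mor K A) : Prop :=
  f \oc k = 0 /\
  forall X (g : Mor X A), f \oc g = 0 -> exists! u : Mor X K, k \oc u = g.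

Definition is_cokernel {A B Q} (f : Mor A B) (c : Mor B Q) : Prop :=
  c \oc f = 0 /\
  forall Y (g : Mor B Y), g \oc f = 0 -> exists! u : Mor Q Y, u \oc c = g.

Definition fully_invariant {K X} (k : Mor K X) : Prop :=
  mono k /\ forall h : Mor X X, exists alpha : Mor K K, h \oc k = k \oc alpha.

Definition fully_coinvariant {X Q} (c : Mor X Q) : Prop :=
  epi c /\ forall h : Mor X X, exists gamma : Mor Q Q, c \oc h = gamma \oc c.

End CatDefs.

Record AbelianCategory := {
  cat :> PreaddCat;
  zero_ob : obj cat;
  zero_ob_id : idm zero_ob = 0;
  biprod : obj cat -> obj cat -> obj cat;
  bp_i1 : forall A B, Mor A (biprod A B);
  bp_i2 : forall A B, Mor B (biprod A B);
  bp_p1 : forall A B, Mor (biprod A B) A;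
  bp_p2 : forall A B, Mor (biprod A B) B;
  bp_p1i1 : forall A B, bp_p1 A B \oc bp_i1 A B = idm A;
  bp_p2i2 : forall A B, bp_p2 A B \oc bp_i2 A B = idm B;
  bp_p1i2 : forall A B, bp_p1 A B \oc bp_i2 A B = 0;
  bp_p2i1 : forall A B, bp_p2 A B \oc bp_i1 A B = 0;
  bp_sum : forall A B,
      bp_i1 A B \oc bp_p1 A B + bp_i2 A B \oc bp_p2 A B = idm (biprod A B);
  ker_ob : forall A B : obj cat, Mor A B -> obj cat;
  ker : forall A B (f : Mor A B), Mor (ker_ob f) A;
  ker_spec : forall A B (f : Mor A B), is_kernel f (ker f);
  coker_ob : forall A B : obj cat, Mor A B -> obj cat;
  coker : forall A B (f : Mor A B), Mor B (coker_ob f);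
  coker_spec : forall A B (f : Mor A B), is_cokernel f (coker f);
  mono_normal : forall A B (m : Mor A B), mono m ->
      exists (Q : obj cat) (g : Mor B Q), is_kernel g m;
  epi_normal : forall A B (e : Mor A B), epi e ->
      exists (K : obj cat) (g : Mor K A), is_cokernel g e
}.

Arguments ker {a A B} f.
Arguments coker {a A B} f.

Definition strongly_rickart {C : AbelianCategory} (M N : obj C) : Prop :=
  forall f : Mor M N, section (ker f) /\ fully_invariant (ker f).

Definition dual_strongly_rickart {C : AbelianCategory} (M N : obj C) : Prop :=
  forall f : Mor M N, retraction (coker f) /\ fully_coinvariant (coker f).

(* Main.v *)
Require Import Defs.
From mathcomp Require Import all_boot all_order all_algebra.
Set Implicit Arguments. Unset Strict Implicit. Unset Printing Implicit Defensive.
Import GRing.Theory.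
Local Open Scope ring_scope.

Section Pre.
Variable C : PreaddCat.
Implicit Types A B X Y : obj C.

Lemma comp0m A B D (f : Mor A B) : (0 : Mor B D) \oc f = 0.
Proof.
have H := compDl (0 : Mor B D) 0 f; rewrite addr0 in H.
by apply: (addrI (0 \oc f)); rewrite addr0 -H.
Qed.

Lemma compm0 A B D (g : Mor B D) : g \oc (0 : Mor A B) = 0.
Proof.
have H := compDr g (0 : Mor A B) 0; rewrite addr0 in H.
by apply: (addrI (g \oc 0)); rewrite addr0 -H.
Qed.

Lemma compNl A B D (a : Mor B D) (f : Mor A B) : (- a) \oc f = - (a \oc f).
Proof. by apply: (addrI (a \oc f)); rewrite -compDl !subrr comp0m. Qed.

Lemma compNr A B D (a : Mor B D) (f : Mor A B) : a \oc (- f) = - (a \oc f).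
Proof. by apply: (addrI (a \oc f)); rewrite -compDr !subrr compm0. Qed.

Lemma compBl A B D (a b : Mor B D) (f : Mor A B) : (a - b) \oc f = a \oc f - b \oc f.
Proof. by rewrite compDl compNl. Qed.

Lemma compBr A B D (a : Mor B D) (f g : Mor A B) : a \oc (f - g) = a \oc f - a \oc g.
Proof. by rewrite compDr compNr. Qed.

Lemma epi0 A B (f : Mor A B) : epi f -> forall Y (g : Mor B Y), g \oc f = 0 -> g = 0.
Proof. by move=> hf Y g H; apply: hf; rewrite H comp0m. Qed.

Lemma epiP A B (f : Mor A B) : (forall Y (g : Mor B Y), g \oc f = 0 -> g = 0) -> epi f.
Proof. by move=> H Y g h E; apply/eqP; rewrite -subr_eq0; apply/eqP/H; rewrite compBl E subrr. Qed.

Lemma mono0 A B (f : Mor A B) : mono f -> forall X (g : Mor X A), f \oc g = 0 -> g = 0.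
Proof. by move=> hf Y g H; apply: hf; rewrite H compm0. Qed.

Lemma ker_mono A B K (f : Mor A B) (k : Mor K A) : is_kernel f k -> mono k.
Proof.
move=> [fk H] X g h E.
have Z : f \oc (k \oc g) = 0 by rewrite Defs.compA fk comp0m.
have [u [_ Hu]] := H _ _ Z.
by rewrite -(Hu g erefl) (Hu h (esym E)).
Qed.
End Pre.

Section Ab.
Variable C : AbelianCategory.

Lemma cover A B X (r : Mor A B) (x : Mor X B) : epi r ->
  exists (P : obj C) (e : Mor P X) (y : Mor P A), epi e /\ r \oc y = x \oc e.
Proof.
move=> hr.
pose phi := r \oc bp_p1 A X - x \oc bp_p2 A X.
have [phik _] := ker_spec phi.
exists (ker_ob phi), (bp_p2 A X \oc ker phi), (bp_p1 A X \oc ker phi); split; last first.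
  apply/eqP; rewrite -subr_eq0 !Defs.compA -compBl; exact/eqP.
have phii1 : phi \oc bp_i1 A X = r.
  by rewrite compBl -!Defs.compA bp_p1i1 bp_p2i1 compm1 compm0 subr0.
apply: epiP => Y0 a H.
have phiepi : epi phi.
  apply: epiP => Y b Hb; apply: (epi0 hr); by rewrite -phii1 Defs.compA Hb comp0m.
have [Z [g0 [phig0 univ]]] := epi_normal phiepi.
have [_ kuniv] := ker_spec phi.
have [w [Hw _]] := kuniv _ g0 phig0.
have H2 : (a \oc bp_p2 A X) \oc g0 = 0 by rewrite -Hw Defs.compA -(Defs.compA a) H comp0m.
have [b [Hb _]] := univ _ _ H2.
have b0 : b = 0.
  apply: (epi0 hr); by rewrite -phii1 Defs.compA Hb -Defs.compA bp_p2i1 compm0.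
have : a \oc bp_p2 A X = 0 by rewrite -Hb b0 comp0m.
move=> /(congr1 (fun t => t \oc bp_i2 A X)).
by rewrite -Defs.compA bp_p2i2 compm1 comp0m.
Qed.

Lemma part1 (M M' N N' : obj C) (r : Mor M M') (s : Mor N' N) :
  epi r -> mono s -> strongly_rickart M N -> strongly_rickart M' N'.
Proof.
move=> hr hs SR f.
pose g := s \oc (f \oc r).
have [[e ek] [km kinv]] := SR g.
have [gk kuniv] := ker_spec g.
have F0 : forall (X : obj C) (y : Mor X M), f \oc (r \oc y) = 0 ->
    exists v, y = ker g \oc v.
  move=> X y Hy.
  have Z : g \oc y = 0 by rewrite /g -!Defs.compA Hy compm0.
  by have [v [Hv _]] := kuniv _ _ Z; exists v.
have Fk : f \oc (r \oc ker g) = 0.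
  apply: (mono0 hs); by rewrite !Defs.compA -(Defs.compA s) gk.
pose p := idm M - ker g \oc e.
have pk : p \oc ker g = 0.
  by rewrite compBl comp1m -Defs.compA ek compm1 subrr.
have HomKL : forall w : Mor (ker_ob g) M, p \oc w = 0.
  move=> w; have [al Hal] := kinv (w \oc e).
  have -> : w = ker g \oc al by rewrite -Hal -Defs.compA ek compm1.
  by rewrite Defs.compA pk comp0m.
have pp : p \oc p = p.
  by rewrite {2}/p compBr compm1 Defs.compA pk comp0m subr0.
have [Z [g0 [rg0 runiv]]] := epi_normal hr.
have pg0 : p \oc g0 = 0.
  have [v0 ->] : exists v, g0 = ker g \oc v by apply: F0; rewrite rg0 compm0.
  by rewrite Defs.compA pk comp0m.
have [sig [sigr _]] := runiv _ _ pg0.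
have psig : p \oc sig = sig.
  by apply: hr; rewrite -Defs.compA sigr pp.
have frsig : f \oc (r \oc sig) = f.
  apply: hr; rewrite -!Defs.compA sigr /p compBr compm1 compBr !Defs.compA.
  by rewrite -(Defs.compA f) Fk comp0m subr0.
have [fk' k'univ] := ker_spec f.
have k'm : mono (ker f) := ker_mono (ker_spec f).
have pZ : forall (X : obj C) (z : Mor X M), f \oc (r \oc z) = 0 -> p \oc z = 0.
  move=> X z /F0 [v ->]. by rewrite Defs.compA pk comp0m.
have sigk' : sig \oc ker f = 0.
  rewrite -psig -Defs.compA; apply: pZ.
  by rewrite !Defs.compA -(Defs.compA f) frsig fk'.
split.
  pose pi := idm M' - r \oc sig.
  have fpi : f \oc pi = 0 by rewrite compBr compm1 frsig subrr.
  have [q [Hq _]] := k'univ _ _ fpi.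
  exists q; apply: k'm.
  by rewrite compm1 Defs.compA Hq compBl comp1m -Defs.compA sigk' compm0 subr0.
split => // h'.
have [P [eps [y [epse Hy]]]] := cover (ker f) hr.
have [v Hv] : exists v, y = ker g \oc v.
  by apply: F0; rewrite Hy Defs.compA fk' comp0m.
have sh : sig \oc (h' \oc ker f) = 0.
  apply: (epi0 epse).
  have E : sig \oc (h' \oc (r \oc ker g)) = 0.
    by rewrite -psig -Defs.compA HomKL.
  rewrite -!Defs.compA -Hy Hv (Defs.compA r) (Defs.compA h') (Defs.compA sig).
  by rewrite E comp0m.
have fh : f \oc (h' \oc ker f) = 0.
  have -> : f \oc (h' \oc ker f) = (f \oc (r \oc sig)) \oc (h' \oc ker f) by rewrite frsig.
  by rewrite -!Defs.compA sh !compm0.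
have [al [Hal _]] := k'univ _ _ fh.
by exists al.
Qed.


End Ab.

Section Op.
Variable C : AbelianCategory.

Definition opP : PreaddCat.
refine (@Build_PreaddCat (obj C) (fun A B => Mor B A)
  (fun A B D g f => f \oc g) (fun A => idm A) _ _ _ _ _).
- by move=> A B D E h g f; rewrite Defs.compA.
- by move=> A B f; rewrite compm1.
- by move=> A B f; rewrite comp1m.
- by move=> A B D g1 g2 f; rewrite compDr.
- by move=> A B D g f1 f2; rewrite compDl.
Defined.

Definition opC : AbelianCategory.
refine (@Build_AbelianCategory opP (zero_ob C) (zero_ob_id C) (@biprod C)
  (@bp_p1 C) (@bp_p2 C) (@bp_i1 C) (@bp_i2 C) _ _ _ _ _
  (fun A B f => @coker_ob C B A f) (fun A B f => @coker C B A f) _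
  (fun A B f => @ker_ob C B A f) (fun A B f => @ker C B A f) _ _ _).
- exact: bp_p1i1.
- exact: bp_p2i2.
- exact: bp_p2i1.
- exact: bp_p1i2.
- exact: bp_sum.
- move=> A B f; exact: (coker_spec f).
- move=> A B f; exact: (ker_spec f).
- move=> A B m hm; exact: (@epi_normal C B A m hm).
- move=> A B m hm; exact: (@mono_normal C B A m hm).
Defined.
End Op.

Theorem theorem2p17 (C : AbelianCategory) (M M' N N' : obj C)
  (r : Mor M M') (s : Mor N' N) (hr : epi r) (hs : mono s) :
  (strongly_rickart M N -> strongly_rickart M' N') /\
  (dual_strongly_rickart M N -> dual_strongly_rickart M' N').
Proof.
split; [exact: (part1 hr hs) | move=> H].
exact: (@part1 (opC C) N N' M M' s r hs hr H).
Qed.
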